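(* Let $G$ be a graph, $\mathcal{F}$ a set of cycles, $x \in V(G)$, and $Y \subseteq V(G)\setminus\{x\}$ such that $N[Y] \cap V(G - Y) \subseteq \{x\}$ and $G[\{x\}\cup Y]$ contains no $\mathcal{F}$-graph. Then $\iota(G,\mathcal{F}) = \iota(G - Y, \mathcal{F})$, and every $\mathcal{F}$-isolating set of $G - Y$ is an $\mathcal{F}$-isolating set of $G$.
   Context: All graphs are finite and simple; cycles are graphs isomorphic to $C_k$ for some $k\ge 3$. For a set $\mathcal{F}$ of graphs, an $\mathcal{F}$-graph is a graph isomorphic to a member of $\mathcal{F}$. For $X \subseteq V(G)$, $N[X]$ is the closed neighbourhood $\bigcup_{v\in X}(\{v\}\cup N(v))$, $G[X]$ is the subgraph induced by $X$, and $G - X$ is the subgraph induced by $V(G)\setminus X$. A set $D\subseteq V(G)$ is an $\mathcal{F}$-isolating set of $G$ if $G - N[D]$ contains no $\mathcal{F}$-graph as a subgraph; $\iota(G,\mathcal{F})$ is the minimum size of an $\mathcal{F}$-isolating set of $G$. *)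

(* Defs.v *)
(* Simple graph G = symmetric irreflexive relation e on a finType T;
   subgraphs induced by vertex sets S : {set T} are represented by S itself. *)
From Stdlib Require Import ClassicalDescription.
From mathcomp Require Import all_boot.
Set Implicit Arguments. Unset Strict Implicit. Unset Printing Implicit Defensive.

Definition asbool (P : Prop) : bool :=
  if excluded_middle_informative P then true else false.

Section Graphs.
Variables (T : finType) (e : rel T).

(* The induced subgraph G[S] contains a subgraph isomorphic to the cycle C_k:
   an injective cyclic sequence of k vertices of S, consecutive ones adjacent. *)
Definition has_cycle (S : {set T}) (k : nat) : Prop :=
  exists f : 'I_k -> T,
    [/\ injective f, (forall i, f i \in S) & (forall i, e (f i) (f (ordS i)))].

(* F is a set of cycles, given by the set of their lengths (each >= 3).
   G[S] contains an F-graph as a subgraph. *)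
Definition hasF (F : nat -> Prop) (S : {set T}) : Prop :=
  exists k, F k /\ has_cycle S k.

Definition Nbhd (S D : {set T}) : {set T} :=
  [set v in S | [exists u in D, (u == v) || e u v]].

Definition isolating (F : nat -> Prop) (S D : {set T}) : Prop :=
  D \subset S /\ ~ hasF F (S :\: Nbhd S D).

(* iota(G[S], F): minimum size of an F-isolating set of G[S]
   (S itself is always isolating when all lengths in F are >= 3) *)
Definition isol_num (F : nat -> Prop) (S : {set T}) : nat :=
  \big[minn/#|S|]_(D : {set T} | asbool (isolating F S D)) #|D|.

End Graphs.

(* Main.v *)
Require Import Defs.
From Stdlib Require Import ClassicalDescription.
From mathcomp Require Import all_boot.
Set Implicit Arguments. Unset Strict Implicit. Unset Printing Implicit Defensive.

Lemma inNbhd (T : finType) (e : rel T) S D v :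
  (v \in Nbhd e S D) = (v \in S) && [exists u in D, (u == v) || e u v].
Proof. by rewrite /Nbhd inE. Qed.

Lemma key (T : finType) (e : rel T) (e_sym : symmetric e)
  (x : T) (Y : {set T})
  (HN : Nbhd e [set: T] Y :&: ~: Y \subset [set x])
  k (f : 'I_k -> T) (finj : injective f) (fe : forall i, e (f i) (f (ordS i)))
  i0 (Hi0 : f i0 \in Y) : forall i, f i \in x |: Y.
Proof.
have toX : forall u v, u \in Y -> v \notin Y -> e u v -> v = x.
  move=> u v uY vY euv; apply/set1P; apply: (subsetP HN).
  rewrite inE inNbhd in_setT in_setC vY /= andbT.
  by apply/existsP; exists u; rewrite uY euv orbT.
move: f finj fe i0 Hi0; case: k => [|k'] f finj fe i0 Hi0; first by case: i0 Hi0.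
set k := k'.+1.
pose h n := f (inord ((i0 + n) %% k)).
have modlt : forall n, (i0 + n) %% k < k by move=> n; rewrite ltn_pmod.
have hE : forall n, e (h n) (h n.+1).
  move=> n; rewrite /h; set j := inord _.
  have -> : (inord ((i0 + n.+1) %% k) : 'I_k) = ordS j.
    apply: val_inj => /=; rewrite inordK // inordK //.
    by rewrite -[in RHS]addn1 modnDml addn1 addnS.
  exact: fe.
have hcov : forall i : 'I_k, exists2 n, n < k & h n = f i.
  move=> i; exists ((k - i0 + i) %% k); first exact: ltn_pmod.
  congr f; apply: val_inj => /=; rewrite inordK // modnDmr addnA subnKC.
    by rewrite modnDl modn_small.
  exact: ltnW (ltn_ord i0).
have hinj : forall a b, a < k -> b < k -> h a = h b -> a = b.
  move=> a b ak bk; rewrite /h => /finj /(congr1 val) /=; rewrite !inordK // => /eqP.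
  by rewrite eqn_modDl !modn_small // => /eqP.
have h0 : h 0 \in Y by rewrite /h addn0 modn_small ?ltn_ord // inord_val.
have hk : h k = h 0.
  by rewrite /h addn0 modnDr.
move=> i; apply/negPn/negP => Hi.
have [n0 n0k hn0] := hcov i.
have n0Y : h n0 \notin Y by rewrite hn0; move: Hi; rewrite !inE negb_or => /andP[].
have n0x : h n0 != x by rewrite hn0; move: Hi; rewrite !inE negb_or => /andP[].
have exP : exists n, h n \notin Y by exists n0.
case: (ex_minnP exP) => j hjY jmin.
have jn0 : j <= n0 := jmin _ n0Y.
have hjx : h j = x.
  case: j hjY jmin jn0 => [|j1] hjY jmin jn0; first by rewrite h0 in hjY.
  apply: (toX (h j1) _ _ hjY (hE j1)).
  by apply/negPn/negP => /jmin; rewrite ltnn.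
have exP2 : exists n, (n < k) && (h n \notin Y) by exists n0; rewrite n0k.
have ubP : forall n, (n < k) && (h n \notin Y) -> n <= k.
  by move=> n /andP[/ltnW].
case: (ex_maxnP exP2 ubP) => m /andP[mk hmY] mmax.
have hmx : h m = x.
  apply: (toX (h m.+1)) => //; last by rewrite e_sym; exact: hE.
  case: (ltngtP m.+1 k) => [mk1||mk1].
  - by apply/negPn/negP => hY; have := mmax _ (introT andP (conj mk1 hY)); rewrite ltnn.
  - by rewrite ltnNge mk.
  - by rewrite mk1 hk.
have jm : j = m by apply: hinj; rewrite ?hjx ?hmx //; apply: leq_ltn_trans n0k.
have n0m : n0 <= m by apply: mmax; rewrite n0k n0Y.
have : n0 = j by apply/eqP; rewrite eqn_leq jn0 jm n0m.
by move=> E; move: n0x; rewrite E hjx eqxx.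
Qed.

Lemma asboolP (P : Prop) : asbool P <-> P.
Proof. by rewrite /asbool; case: excluded_middle_informative. Qed.

Lemma isol_le (T : finType) (e : rel T) F S D :
  isolating e F S D -> isol_num e F S <= #|D|.
Proof.
move=> HD; rewrite /isol_num.
have : D \in index_enum {set T} by rewrite mem_index_enum.
have PD : asbool (isolating e F S D) by apply/asboolP.
elim: (index_enum {set T}) => // a r IH; rewrite inE big_cons.
case/orP => [/eqP <-|Dr]; first by rewrite PD geq_minl.
case: ifP => _; last exact: IH.
by rewrite geq_min IH ?orbT.
Qed.

Lemma isol_ge (T : finType) (e : rel T) F S n :
  (forall D, isolating e F S D -> n <= #|D|) -> n <= #|S| -> n <= isol_num e F S.
Proof.
move=> H1 H2; rewrite /isol_num; apply: (big_ind (fun m => n <= m)) => //.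
  by move=> a b Ha Hb; rewrite leq_min Ha Hb.
by move=> D /asboolP /H1.
Qed.

Lemma no_cycle_empty (T : finType) (e : rel T) (F : nat -> Prop)
  (F_cycles : forall k, F k -> 3 <= k) : ~ hasF e F set0.
Proof.
case=> k [Fk [f [_ fin _]]].
have k0 : 0 < k by move: (F_cycles _ Fk); case: k {f fin Fk}.
by move: (fin (Ordinal k0)); rewrite inE.
Qed.

Theorem lemma3 (T : finType) (e : rel T) (e_sym : symmetric e) (e_irr : irreflexive e)
  (F : nat -> Prop) (F_cycles : forall k, F k -> 3 <= k)
  (x : T) (Y : {set T}) (xY : x \notin Y)
  (HN : Nbhd e [set: T] Y :&: ~: Y \subset [set x])
  (HY : ~ hasF e F (x |: Y)) :
  isol_num e F [set: T] = isol_num e F (~: Y) /\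
  (forall D : {set T}, isolating e F (~: Y) D -> isolating e F [set: T] D).
Proof.
have toX : forall u v, u \in Y -> v \notin Y -> e u v -> v = x.
  move=> u v uY vY euv; apply/set1P; apply: (subsetP HN).
  rewrite inE inNbhd in_setT in_setC vY /= andbT.
  by apply/existsP; exists u; rewrite uY euv orbT.
have part2 : forall D : {set T}, isolating e F (~: Y) D -> isolating e F [set: T] D.
  move=> D [DY HD]; split; first exact: subsetT.
  case=> k [Fk [f [finj fin fe]]].
  case: (boolP [exists i, f i \in Y]) => [/existsP [i0 Hi0]|].
    apply: HY; exists k; split => //; exists f; split => //.
    exact: (key e_sym HN finj fe Hi0).
  rewrite negb_exists => /forallP nY.
  apply: HD; exists k; split => //; exists f; split => // i.
  move: (fin i) (nY i); rewrite !inE andbT /= => H1 ->; by rewrite andbT.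
have selfiso : forall S : {set T}, isolating e F S S.
  move=> S; split => //; suff -> : S :\: Nbhd e S S = set0 by exact: no_cycle_empty.
  apply/setP => v; rewrite !inE.
  case: (boolP (v \in S)) => /= vS; rewrite ?andbT //; apply/negbTE/negPn/existsP; exists v.
  by rewrite vS eqxx.
split; last exact: part2.
apply/eqP; rewrite eqn_leq; apply/andP; split.
  apply: isol_ge; first by move=> D /part2 /isol_le.
  exact: isol_le (part2 _ (selfiso _)).
apply: isol_ge; last first.
  by apply: leq_trans (isol_le (selfiso _)) _; exact: subset_leq_card (subsetT _).
move=> D [_ HD].
pose D' := (D :\: Y) :|: (if D :&: Y == set0 then set0 else [set x]).
have D'iso : isolating e F (~: Y) D'.
  split.
    apply/subsetP => v; rewrite !inE; case/orP => [/andP[] //|].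
    by case: ifP; rewrite ?inE // => _ /eqP ->.
  case=> k [Fk [f [finj fin fe]]]; apply: HD; exists k; split => //.
  exists f; split => // i; move: (fin i); rewrite !inE /=.
  case/andP => nN fY; rewrite fY /= in nN; rewrite andbT; apply/negP => /existsP [u /andP [uD eu]].
  move/negP: nN; apply; apply/existsP.
  case: (boolP (u \in Y)) => uY.
    have fx : f i = x.
      apply: (toX u) => //; case/orP: eu => // /eqP E; by rewrite -E uY in fY.
    exists x; rewrite fx eqxx /= andbT !inE.
    have -> : (D :&: Y == set0) = false.
      by apply/negbTE/set0Pn; exists u; rewrite inE uD.
    by rewrite inE eqxx orbT.
  by exists u; rewrite eu andbT !inE uY uD.
apply: leq_trans (isol_le D'iso) _.
rewrite -(cardsID Y D) addnC /D' cardsU; apply: leq_trans (leq_subr _ _) _.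
rewrite leq_add2l.
case: ifP => [_|/negbT /set0Pn [u uDY]]; first by rewrite cards0.
by rewrite cards1 card_gt0; apply/set0Pn; exists u.
Qed.
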